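(* Let $f:\mathbb{R}^n\to\mathbb{R}$ be differentiable, $\mu$-strongly convex, with $L$-Lipschitz gradient $\nabla f$, and let $x^*$ be its unique minimizer. Suppose the estimators $G^t$ are independent versions of an unbiased estimator $G$ of $\nabla f$, and that $G$ is $L$-Lipschitz continuous almost surely. Let $\mathcal{E}^t$ denote the event that $\|G^t(x^t)\|_\infty\le\eta$. Then the iterates of SMGD satisfy $$\mathbb{E}\left[\|x^{t+1}-x^*\|_2^2\,\middle|\,x^t,\mathcal{E}^t\right]\le\Big(1-\frac{2\alpha\mu}{\eta}\Big)\|x^t-x^*\|_2^2+\frac{L\alpha^2\sqrt{n}}{\eta}\|x^t-x^*\|_2+\frac{\alpha^2}{\eta}\,\mathbb{E}\left[\|G^t(x^* )\|_1\,\middle|\,x^t,\mathcal{E}^t\right].$$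
   Context: A differentiable $f$ is $\mu$-strongly convex if $\langle\nabla f(x)-\nabla f(y),x-y\rangle\ge\mu\|x-y\|_2^2$ for all $x,y$. SMGD: Let $\alpha>0$, $\eta>0$, $x^0\in\alpha\mathbb{Z}^n$. At step $t$ a random vector $G^t(x^t)\in\mathbb{R}^n$ is drawn; then for each coordinate $i$, conditionally on $G^t$ and $x^t$, $\Delta^t_i\in\{0,1\}$ is Bernoulli with $\mathbb{P}[\Delta^t_i=1\mid G^t,x^t]=\min(|G^t(x^t)_i|/\eta,1)$, and $x^{t+1}_i=x^t_i-\alpha\,\mathrm{sgn}(G^t(x^t)_i)\Delta^t_i$. A random function $G$ is an unbiased estimator of $\nabla f$ if $\mathbb{E}[G(x)]=\nabla f(x)$ for all $x$. Standing assumptions: $\{G^t\}$ are i.i.d. copies of $G$, each $G^t$ is independent of $x^t$, and $\mathbb{E}[G^t(x^t)\mid x^t,\mathcal{E}^t]=\nabla f(x^t)$. *)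

(* Defs.v *)
From HB Require Import structures.
From mathcomp Require Import all_boot all_order all_algebra.
From mathcomp Require Import all_classical all_reals all_analysis.
Set Implicit Arguments. Unset Strict Implicit. Unset Printing Implicit Defensive.
Import Order.TTheory GRing.Theory Num.Theory.
Import numFieldNormedType.Exports.
Local Open Scope classical_set_scope.
Local Open Scope ring_scope.

Section Norms.
Variables (R : realType) (n : nat).
Definition dotp (u v : 'rV[R]_n) : R := \sum_(i < n) u 0 i * v 0 i.
Definition norm2sq (v : 'rV[R]_n) : R := \sum_(i < n) (v 0 i) ^+ 2.
Definition norm2 (v : 'rV[R]_n) : R := Num.sqrt (norm2sq v).
Definition norm1 (v : 'rV[R]_n) : R := \sum_(i < n) `|v 0 i|.
Definition norminf (v : 'rV[R]_n) : R := \big[Num.max/0]_(i < n) `|v 0 i|.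
Definition grad (f : 'rV[R]_n -> R) (x : 'rV[R]_n) : 'rV[R]_n :=
  \row_(i < n) ('d f x (delta_mx 0 i : 'rV[R]_n)).
End Norms.

Definition strongly_convex (R : realType) n (f : 'rV[R]_n -> R) (mu : R) :=
  forall x y, mu * norm2sq (x - y) <= dotp (grad f x - grad f y) (x - y).

Definition condE d (T : measurableType d) (R : realType)
  (P : probability T R) (E : set T) (X : T -> \bar R) : \bar R :=
  ((\int[P]_(w in E) X w) * ((fine (P E))^-1)%:E)%E.

Definition sigmaG d (T : measurableType d) (R : realType) n
  (G : T -> 'rV[R]_n -> 'rV[R]_n) : set (set T) :=
  <<s [set A | exists (y : 'rV[R]_n) (j : 'I_n) (B : set R),
         measurable B /\ A = (fun w => G w y 0 j) @^-1` B] >>.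

(* One SMGD step from state x, with estimator draw G w and Bernoulli mask D w. *)
Definition smgd_step (R : realType) n (alpha : R) (x : 'rV[R]_n)
  (g : 'rV[R]_n) (D : 'I_n -> R) : 'rV[R]_n :=
  \row_(i < n) (x 0 i - alpha * Num.sg (g 0 i) * D i).

(* Main.v *)
Require Import Defs.
From HB Require Import structures.
From mathcomp Require Import all_boot all_order all_algebra.
From mathcomp Require Import all_classical all_reals all_analysis.
From mathcomp Require Import ring lra.
From mathcomp Require Import measurable_realfun.
Import Order.TTheory GRing.Theory Num.Theory.
Import numFieldNormedType.Exports.
Local Open Scope classical_set_scope.
Local Open Scope ring_scope.

Lemma sum_sq_le (R : realType) (n : nat) (b : 'I_n -> R) :
  (\sum_i b i) ^+ 2 <= n%:R * \sum_i b i ^+ 2.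
Proof.
have e1 i : \sum_j (b i - b j) ^+ 2
    = n%:R * b i ^+ 2 + \sum_j b j ^+ 2 - (b i * \sum_j b j) *+ 2.
  rewrite mulr_sumr -sumrMnl.
  have -> : n%:R * b i ^+ 2 = \sum_(j < n) b i ^+ 2.
    by rewrite sumr_const card_ord mulr_natl.
  rewrite -big_split -sumrB /=; apply: eq_bigr => j _; ring.
have e2 : \sum_i \sum_j (b i - b j) ^+ 2
    = (n%:R * \sum_i b i ^+ 2) *+ 2 - ((\sum_i b i) ^+ 2) *+ 2.
  under eq_bigr do rewrite e1.
  rewrite sumrB big_split /= -mulr_sumr sumr_const card_ord sumrMnl -mulr_suml -expr2 -mulr_natl.
  ring.
have : 0 <= \sum_i \sum_j (b i - b j) ^+ 2.
  by apply: sumr_ge0 => i _; apply: sumr_ge0 => j _; exact: sqr_ge0.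
rewrite e2 subr_ge0 => h.
by rewrite -(ler_pMn2r (n:=2)) //.
Qed.

Lemma norm1_le (R : realType) n (v : 'rV[R]_n) :
  norm1 v <= Num.sqrt n%:R * norm2 v.
Proof.
rewrite /norm2 -sqrtrM ?ler0n //.
have h0 : 0 <= norm1 v by apply: sumr_ge0 => i _.
rewrite -(ger0_norm h0) -sqrtr_sqr; apply: ler_wsqrtr.
rewrite /norm1 /norm2sq.
have -> : \sum_(i < n) v 0 i ^+ 2 = \sum_(i < n) `|v 0 i| ^+ 2.
  by apply: eq_bigr => i _; rewrite real_normK ?num_real.
exact: sum_sq_le.
Qed.

Lemma norm1_tri (R : realType) n (u v : 'rV[R]_n) :
  norm1 u <= norm1 v + norm1 (u - v).
Proof.
rewrite /norm1 -big_split /=; apply: ler_sum => i _.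
rewrite !mxE; apply: (le_trans _ (ler_normD _ _)); by rewrite addrCA subrr addr0.
Qed.

Lemma grad_min (R : realType) n (f : 'rV[R]_n -> R) xs :
  (forall y, differentiable f y) -> (forall y, f xs <= f y) ->
  forall v, 'd f xs v = 0.
Proof.
move=> hd hmin v.
pose phi := fun t : R => f (xs + t *: v).
have E t : (fun h : R => h^-1 *: ((phi \o shift t) (h *: 1) - phi t)) =
    (fun h => h^-1 *: ((f \o shift (xs + t *: v)) (h *: v) - f (xs + t *: v))).
  apply: funext => h /=; rewrite /phi /shift /=.
  have -> : h%:A = h :> R by rewrite /GRing.scale /= mulr1.
  by congr (_ *: (f _ - _)); rewrite scalerDl addrCA.
have dphi t : derivable phi t 1.
  by rewrite /derivable E; exact: diff_derivable.
have Dphi t : 'D_1 phi t = 'D_v f (xs + t *: v).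
  by rewrite /derive E.
have := @derive1_at_min R phi (-1) 1 0.
case.
- lra.
- by move=> t _; exact: dphi.
- by rewrite in_itv /=; apply/andP; split; lra.
- by move=> t _; rewrite /phi scale0r addr0; exact: hmin.
move=> _ h0; rewrite -deriveE //.
by move: h0; rewrite Dphi scale0r addr0.
Qed.

Section MeasHelpers.
Context d' (T' : measurableType d') (R : realType).

Lemma meas_bigmax n (F : 'I_n -> T' -> R) :
  (forall j, measurable_fun setT (F j)) ->
  measurable_fun setT (fun w => \big[Num.max/0]_(j < n) `|F j w|).
Proof.
move=> mF.
suff H : forall s : seq 'I_n,
    measurable_fun setT (fun w => \big[Num.max/0]_(j <- s) `|F j w|).
  exact: H.
elim=> [|j s ih].
  under eq_fun do rewrite big_nil.
  exact: measurable_cst.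
under eq_fun do rewrite big_cons.
apply: measurable_maxr => //.
by apply: measurableT_comp; [exact: normr_measurable | exact: mF].
Qed.

Lemma meas_le (h : T' -> R) c : measurable_fun setT h ->
  measurable [set w | h w <= c].
Proof.
move=> mh; rewrite -preimage_itvNyc -(setTI (_ @^-1` _)).
exact: mh (measurable_itv _).
Qed.

Lemma meas_gt (h : T' -> R) c : measurable_fun setT h ->
  measurable [set w | c < h w].
Proof.
move=> mh; rewrite -preimage_itvoy -(setTI (_ @^-1` _)).
exact: mh (measurable_itv _).
Qed.

Lemma meas_lt (h : T' -> R) c : measurable_fun setT h ->
  measurable [set w | h w < c].
Proof.
move=> mh; rewrite -preimage_itvNyo -(setTI (_ @^-1` _)).
exact: mh (measurable_itv _).
Qed.

End MeasHelpers.

Lemma bounded_on d' (T' : measurableType d') (R : realType) (A : set T')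
  (h : T' -> R) M : (forall w, A w -> `|h w| <= M) -> [bounded h x | x in A].
Proof.
move=> hM; exists M; split; first exact: num_real.
move=> N hN w Aw; apply: le_trans (hM w Aw) _; exact: ltW.
Qed.

Lemma le_bigmax_R (R : realType) n (F : 'I_n -> R) i :
  F i <= \big[Num.max/0]_(j < n) F j.
Proof.
suff H : forall s : seq 'I_n, i \in s -> F i <= \big[Num.max/0]_(j <- s) F j.
  by apply: H; rewrite /index_enum -enumT mem_enum.
elim=> [//|j s ih]; rewrite in_cons big_cons => /orP[/eqP ->|/ih h].
  by rewrite le_max lexx.
by rewrite le_max h orbT.
Qed.

Lemma in_setb (T : Type) (P : T -> bool) x : (x \in [set y | P y]) = P x.
Proof. by apply/idP/idP => [/set_mem|H] //; exact: mem_set. Qed.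

Lemma meas_sg d' (T' : measurableType d') (R : realType) (h : T' -> R) :
  measurable_fun setT h -> measurable_fun setT (fun w => Num.sg (h w)).
Proof.
move=> mh.
have -> : (fun w => Num.sg (h w)) =
    (\1_[set w | 0 < h w] \- \1_[set w | h w < 0]) :> (T' -> R).
  apply/funext => w /=; rewrite !indicE !in_setb.
  case: (ltgtP (h w) 0) => H.
  - by rewrite ltr0_sg //= sub0r.
  - by rewrite gtr0_sg //= subr0.
  - by rewrite H sgr0 /= subrr.
apply: measurable_funB; apply: measurable_indic.
  exact: (@meas_gt _ T' R h 0 mh).
exact: (@meas_lt _ T' R h 0 mh).
Qed.

Ltac mfun := repeat first [ exact: measurable_cst | apply: measurable_funD
  | apply: measurable_funB | apply: measurable_funM | apply: measurable_funX
  | apply: measurable_funN | apply: meas_sg ].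

Theorem theorem5p1
  (R : realType) (n : nat) (f : 'rV[R]_n -> R) (mu L alpha eta : R)
  (xs : 'rV[R]_n)
  (hdiff : forall y, differentiable f y)
  (hmu : 0 < mu) (hsc : strongly_convex f mu)
  (hLip : forall y z, norm2 (grad f y - grad f z) <= L * norm2 (y - z))
  (hmin : forall y, f xs <= f y)
  (halpha : 0 < alpha) (heta : 0 < eta)
  (d : measure_display) (T : measurableType d) (P : probability T R)
  (G : T -> 'rV[R]_n -> 'rV[R]_n) (D : T -> 'I_n -> R)
  (hGmeas : forall y i, measurable_fun setT (fun w => G w y 0 i))
  (hunbiased : forall y i, P.-integrable setT (fun w => (G w y 0 i)%:E) /\
      (\int[P]_w (G w y 0 i)%:E = (grad f y 0 i)%:E)%E)
  (hGlip : {ae P, forall w, forall y z,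
      norm2 (G w y - G w z) <= L * norm2 (y - z)})
  (x : 'rV[R]_n) (hx : forall i, exists k : int, x 0 i = k%:~R * alpha)
  (E : set T) (hEdef : E = [set w | norminf (G w x) <= eta])
  (hEpos : (0 < P E)%E)
  (hcond : forall i, P.-integrable E (fun w => (G w x 0 i)%:E) /\
      condE P E (fun w => (G w x 0 i)%:E) = (grad f x 0 i)%:E)
  (hD01 : forall w i, D w i = 0 \/ D w i = 1)
  (hDmeas : forall i, measurable_fun setT (fun w => D w i))
  (hDlaw : forall i A, sigmaG G A ->
      (\int[P]_(w in A) (D w i)%:E
       = \int[P]_(w in A) (Num.min (`|G w x 0 i| / eta) 1)%:E)%E) :
  (condE P E (fun w => (norm2sq (smgd_step alpha x (G w x) (D w) - xs))%:E)
   <= ((1 - 2 * alpha * mu / eta) * norm2sq (x - xs)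
        + L * alpha ^+ 2 * Num.sqrt (n%:R) / eta * norm2 (x - xs))%:E
      + (alpha ^+ 2 / eta)%:E * condE P E (fun w => (norm1 (G w xs))%:E))%E.
Proof.
have mE : measurable E.
  rewrite hEdef; apply: meas_le; apply: meas_bigmax => j; exact: hGmeas.
have PEle : (P E <= 1)%E := probability_le1 P mE.
have PEfin : P E = (fine (P E))%:E.
  by rewrite fineK // ge0_fin_numE // (le_lt_trans PEle) // ltry.
set p := fine (P E) in PEfin *.
have p0 : 0 < p by rewrite -lte_fin -PEfin.
have PEfin2 : (P : measure T R) E = p%:E by exact: PEfin.
have hgE : forall w i, E w -> `|G w x 0 i| <= eta.
  move=> w i; rewrite hEdef /= /norminf => h; apply: le_trans h.
  exact: (@le_bigmax_R R n (fun j => `|G w x 0 j|) i).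
have bint : forall h : T -> R, measurable_fun setT h -> forall M,
    (forall w, E w -> `|h w| <= M) -> P.-integrable E (EFin \o h).
  move=> h mh M hM; apply: measurable_bounded_integrable => //.
  - exact: (le_lt_trans PEle (ltry _)).
  - exact: measurable_funS mh.
  - exact: bounded_on hM.
pose G0 := [set A | exists (y : 'rV[R]_n) (j : 'I_n) (B : set R),
         measurable B /\ A = (fun w => G w y 0 j) @^-1` B].
pose T' := g_sigma_algebraType G0.
have mgT' : forall j, measurable_fun (T:=T') setT (fun w => G w x 0 j).
  move=> j _ B mB; rewrite setTI; apply: sub_sigma_algebra.
  by exists x, j, B.
have sE : sigmaG G E.
  have := (@meas_le _ T' R (fun w => norminf (G w x)) eta (@meas_bigmax _ T' R n (fun j w => G w x 0 j) mgT')).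
  by rewrite hEdef.
have sEp : forall i, sigmaG G (E `&` [set w | 0 < G w x 0 i]).
  move=> i; apply: (@measurableI _ T') => //; exact: (@meas_gt _ T' R _ 0 (mgT' i)).
have sEn : forall i, sigmaG G (E `&` [set w | G w x 0 i < 0]).
  move=> i; apply: (@measurableI _ T') => //; exact: (@meas_lt _ T' R _ 0 (mgT' i)).
have K1 : forall i, (\int[P]_(w in E) (D w i)%:E
    = \int[P]_(w in E) (`|G w x 0%R i| / eta)%:E)%E.
  move=> i; rewrite hDlaw //; apply: eq_integral => w /set_mem Ew.
  by congr EFin; rewrite min_l // ler_pdivrMr // mul1r; exact: hgE.
have pt0 : (point : \bar R) = 0%E := erefl.
pose Bp i := [set w | 0 < G w x 0 i].
pose Bn i := [set w | G w x 0 i < 0].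
have Ksg : forall i (h : T -> R), P.-integrable E (EFin \o h) ->
   (\int[P]_(w in E) (Num.sg (G w x 0%R i) * h w)%:E
    = \int[P]_(w in E `&` Bp i) (h w)%:E
      - \int[P]_(w in E `&` Bn i) (h w)%:E)%E.
  move=> i h ih.
  have mBp : measurable (Bp i) := @meas_gt _ T R _ 0 (hGmeas x i).
  have mBn : measurable (Bn i) := @meas_lt _ T R _ 0 (hGmeas x i).
  have i1 : P.-integrable E ((EFin \o h) \_ (Bp i)).
    apply/(integrable_restrict P mBp mE).
    by apply: (integrableS mE _ _ ih); [exact: measurableI|exact: subIsetl].
  have i2 : P.-integrable E ((EFin \o h) \_ (Bn i)).
    apply/(integrable_restrict P mBn mE).
    by apply: (integrableS mE _ _ ih); [exact: measurableI|exact: subIsetl].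
  rewrite !integral_mkcondr -integralB //; apply: eq_integral => w _.
  rewrite /= !patchE /Bp /Bn !in_setb /=.
  case: (ltgtP (G w x 0 i) 0) => H.
  - rewrite ltr0_sg //=; change (@point _) with (0%E : \bar R).
    by rewrite add0e mulN1r.
  - rewrite gtr0_sg //=; change (@point _) with (0%E : \bar R).
    by rewrite sube0 mul1r.
  - rewrite H sgr0 /=; change (@point _) with (0%E : \bar R).
    by rewrite sube0 mul0r.
have mm : forall i, measurable_fun setT
    (fun w => Num.min (`|G w x 0 i| / eta) 1).
  move=> i; apply: measurable_minr => //.
  apply: measurable_funM => //.
  by apply: measurableT_comp; [exact: normr_measurable|exact: hGmeas].
have Dint : forall i, P.-integrable E (EFin \o (fun w => D w i)).
  move=> i; apply: (bint _ (hDmeas i) 1) => w _.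
  by case: (hD01 w i) => ->; rewrite ?normr0 ?normr1.
have mint : forall i, P.-integrable E
    (EFin \o (fun w => Num.min (`|G w x 0 i| / eta) 1)).
  move=> i; apply: (bint _ (mm i) 1) => w _.
  rewrite ger0_norm; first by rewrite ge_min lexx orbT.
  by rewrite le_min ler01 divr_ge0 // ltW.
have gint : forall i, (\int[P]_(w in E) (G w x 0%R i)%:E
    = (grad f x 0 i * p)%:E)%E.
  move=> i; have h := (hcond i).2; rewrite /condE in h.
  have hf := integrable_fin_num mE (hcond i).1.
  rewrite -(fineK hf) -EFinM in h; have h2 := EFin_inj h.
  by rewrite -(fineK hf) -h2 divfK // gt_eqF.
have K2 : forall i, (\int[P]_(w in E) (Num.sg (G w x 0%R i) * D w i)%:E
    = (grad f x 0 i * p / eta)%:E)%E.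
  move=> i; rewrite (Ksg i _ (Dint i)) (hDlaw i _ (sEp i)) (hDlaw i _ (sEn i)).
  rewrite -(Ksg i _ (mint i)).
  transitivity (\int[P]_(w in E) ((G w x 0%R i)%:E * (eta^-1)%:E))%E.
    apply: eq_integral => w /set_mem Ew; rewrite -EFinM; congr EFin.
    rewrite min_l; last by rewrite ler_pdivrMr // mul1r; exact: hgE.
    by rewrite mulrA -numEsg.
  rewrite integralZr //; last exact: (hcond i).1.
  have h := gint i.
  by rewrite EFinM -h.
pose a i := x 0 i - xs 0 i.
pose z i w := a i ^+ 2 - 2 * alpha * a i * (Num.sg (G w x 0 i) * D w i)
   + alpha ^+ 2 * D w i.
pose Y w := norm2sq (smgd_step alpha x (G w x) (D w) - xs).
have Yz : forall w, Y w <= \sum_i z i w.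
  move=> w; rewrite /Y /norm2sq; apply: ler_sum => i _; rewrite !mxE /z /a.
  have hs : Num.sg (G w x 0 i) ^+ 2 <= 1.
    by rewrite sqr_sg; case: (_ != 0).
  case: (hD01 w i) => ->.
  - by rewrite le_eqVlt; apply/orP; left; apply/eqP; ring.
  - have ha : 0 <= alpha ^+ 2 * (1 - Num.sg (G w x 0 i) ^+ 2).
      by apply: mulr_ge0; [exact: sqr_ge0| rewrite subr_ge0].
    rewrite -subr_ge0; apply: le_trans ha _; rewrite le_eqVlt; apply/orP; left.
    apply/eqP; ring.
have mY : measurable_fun setT Y.
  have -> : Y = (fun w => \sum_(i < n)
      (x 0 i - alpha * Num.sg (G w x 0 i) * D w i - xs 0 i) ^+ 2).
    by apply/funext => w; rewrite /Y /norm2sq; apply: eq_bigr => i _; rewrite !mxE.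
  by apply: measurable_sum => i; mfun; first [exact: hGmeas | exact: hDmeas].
have mz : forall i, measurable_fun setT (z i).
  by move=> i; rewrite /z; mfun; first [exact: hGmeas | exact: hDmeas].
have Y0 : forall w, 0 <= Y w.
  by move=> w; apply: sumr_ge0 => i _; exact: sqr_ge0.
have sDint : forall i, P.-integrable E
    (EFin \o (fun w => Num.sg (G w x 0 i) * D w i)).
  move=> i; apply: (bint _ _ 1).
    by mfun; first [exact: hGmeas | exact: hDmeas].
  move=> w _; rewrite normrM normr_sg.
  by case: (hD01 w i) => ->; case: (_ != 0); rewrite ?normr0 ?normr1 ?mulr0 ?mulr1.
have cint : forall c : R, P.-integrable E (EFin \o (fun _ : T => c)).
  by move=> c; apply: (bint _ (measurable_cst c) `|c|).
have zint : forall i, P.-integrable E (EFin \o z i).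
  move=> i; apply: (bint _ (mz i) (a i ^+ 2 + 2 * alpha * `|a i| + alpha ^+ 2)).
  move=> w _; rewrite /z.
  set s := Num.sg _.
  have hs : `|s| <= 1 by rewrite normr_sg; case: (_ != 0).
  have h1 : `|a i * s| <= `|a i| by rewrite normrM ler_piMr.
  move: h1; rewrite ler_norml => /andP[h1 h2].
  have h3 := normr_ge0 (a i).
  have h4 := sqr_ge0 (a i).
  rewrite ler_norml; case: (hD01 w i) => ->; apply/andP; split; nra.
have intY : (\int[P]_(w in E) (Y w)%:E
    <= \sum_i \int[P]_(w in E) (z i w)%:E)%E.
  apply: (@le_trans _ _ (\int[P]_(w in E) (\sum_i z i w)%:E)%E).
    apply: ge0_le_integral => //.
    - by move=> w _; rewrite lee_fin.
    - by apply/measurable_EFinP; exact: measurable_funS mY.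
    - apply/measurable_EFinP; apply: (measurable_funS measurableT) => //.
      by apply: measurable_sum => i; exact: mz.
    - by move=> w _; rewrite lee_fin.
  under eq_integral do rewrite -sumEFin.
  by rewrite integral_sum.
have Iz : forall i, (\int[P]_(w in E) (z i w)%:E
    = (a i ^+ 2 * p - 2 * alpha * a i * (grad f x 0%R i * p / eta))%:E
      + (alpha ^+ 2)%:E * \int[P]_(w in E) (`|G w x 0%R i| / eta)%:E)%E.
  move=> i.
  rewrite (eq_integral (fun w => cst (a i ^+ 2)%:E w
     + (((- (2 * alpha * a i))%:E * (Num.sg (G w x 0%R i) * D w i)%:E)
     + (alpha ^+ 2)%:E * (D w i)%:E))%E); last first.
    by move=> w _; rewrite /z /cst -!EFinM -!EFinD; congr EFin; ring.
  have i1 : P.-integrable E (fun w =>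
      ((- (2 * alpha * a i))%:E * (Num.sg (G w x 0%R i) * D w i)%:E)%E).
    by apply: integrableZl => //; exact: sDint.
  have i2 : P.-integrable E (fun w => ((alpha ^+ 2)%:E * (D w i)%:E)%E).
    by apply: integrableZl => //; exact: Dint.
  rewrite integralD //; [|exact: (cint (a i ^+ 2))|exact: integrableD].
  rewrite integralD //.
  rewrite integralZl //; last exact: sDint.
  rewrite integralZl //; last exact: Dint.
  rewrite K2 K1 integral_cst // PEfin2 -!EFinM addeA -EFinD.
  by congr (_ + _)%E; congr EFin; ring.
have [w0 hw0] : exists w, forall y z,
    norm2 (G w y - G w z) <= L * norm2 (y - z).
  apply: contrapT => hne.
  case: hGlip => N [mN [PN0 sub]].
  have : (P setT <= P N)%E.
    apply: le_measure; rewrite ?inE //.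
    by move=> w _; apply: sub => /= hq; apply: hne; exists w.
  by rewrite probability_setT PN0 lee_fin ler10.
have hLa : 0 <= L * norm2 (x - xs) := le_trans (sqrtr_ge0 _) (hw0 x xs).
pose c i := a i ^+ 2 * p - 2 * alpha * a i * (grad f x 0 i * p / eta).
have habs : forall i, P.-integrable E (EFin \o (fun w => `|G w x 0 i| / eta)).
  move=> i; apply: (bint _ _ 1).
    by mfun; apply: measurableT_comp; [exact: normr_measurable|exact: hGmeas].
  move=> w Ew; rewrite ger0_norm; last by rewrite divr_ge0 // ltW.
  rewrite ler_pdivrMr // mul1r.
  exact: hgE.
have mn1 : forall y, measurable_fun setT (fun w => norm1 (G w y)).
  move=> y; apply: measurable_sum => i.
  by apply: measurableT_comp; [exact: normr_measurable|exact: hGmeas].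
have intY2 : (\int[P]_(w in E) (Y w)%:E <= (\sum_i c i)%:E
    + \int[P]_(w in E) (alpha ^+ 2 / eta * norm1 (G w x))%:E)%E.
  apply: le_trans intY _; rewrite le_eqVlt; apply/orP; left; apply/eqP.
  under eq_bigr do rewrite Iz.
  rewrite big_split /= sumEFin; congr (_ + _)%E.
  transitivity (\sum_i \int[P]_(w in E) (alpha ^+ 2 * (`|G w x 0 i| / eta))%:E)%E.
    apply: eq_bigr => i _; rewrite -integralZl //; last exact: habs.
  rewrite -integral_sum //; last first.
    by move=> i; exact: (integrableZl mE (alpha ^+ 2) (habs i)).
  apply: eq_integral => w _; rewrite sumEFin; congr EFin.
  rewrite /norm1 mulr_sumr; apply: eq_bigr => i _; rewrite mulrA; ring.
have k0 : 0 <= alpha ^+ 2 / eta by rewrite divr_ge0 // ?sqr_ge0 // ltW.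
have n10 : forall v : 'rV[R]_n, 0 <= norm1 v.
  by move=> v; apply: sumr_ge0 => i _.
pose Cst := Num.sqrt n%:R * (L * norm2 (x - xs)).
have Cst0 : 0 <= Cst by rewrite mulr_ge0 // sqrtr_ge0.
have hae : (\int[P]_(w in E) (alpha ^+ 2 / eta * norm1 (G w x))%:E
   <= \int[P]_(w in E) (alpha ^+ 2 / eta * (norm1 (G w xs) + Cst))%:E)%E.
  apply: ae_ge0_le_integral => //.
  - by move=> w _; rewrite lee_fin mulr_ge0.
  - apply/measurable_EFinP; apply: (measurable_funS measurableT) => //.
    by apply: measurable_funM; [exact: measurable_cst|exact: mn1].
  - by move=> w _; rewrite lee_fin mulr_ge0 // addr_ge0.
  - apply/measurable_EFinP; apply: (measurable_funS measurableT) => //.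
    apply: measurable_funM; first exact: measurable_cst.
    by apply: measurable_funD; [exact: mn1|exact: measurable_cst].
  apply: filterS hGlip => w hw _; rewrite lee_fin; apply: (ler_wpM2l k0).
  apply: le_trans (@norm1_tri _ _ (G w x) (G w xs)) _; rewrite lerD2l.
  apply: le_trans (@norm1_le _ _ _) _; apply: (ler_wpM2l (sqrtr_ge0 _)); exact: hw.
pose I1 := (\int[P]_(w in E) (norm1 (G w xs))%:E)%E.
have hsplit : (\int[P]_(w in E) (alpha ^+ 2 / eta * (norm1 (G w xs) + Cst))%:E
    = (alpha ^+ 2 / eta)%:E * I1 + (alpha ^+ 2 / eta * Cst * p)%:E)%E.
  rewrite (eq_integral (fun w => ((alpha ^+ 2 / eta)%:E * (norm1 (G w xs))%:E
     + cst (alpha ^+ 2 / eta * Cst)%:E w)%E)); last first.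
    by move=> w _; rewrite /cst -EFinM -EFinD mulrDr.
  rewrite ge0_integralD //.
  rewrite ge0_integralZl_EFin //.
  rewrite integral_cst // PEfin2 -EFinM //.
  - by move=> w _; rewrite lee_fin.
  - by apply/measurable_EFinP; exact: measurable_funS (mn1 xs).
  - by move=> w _; rewrite mule_ge0 // lee_fin.
  - apply: measurable_funeM; apply/measurable_EFinP.
    exact: measurable_funS (mn1 xs).
  - by move=> w _; rewrite /cst lee_fin mulr_ge0.
have hg0 := @grad_min R n f xs hdiff hmin.
have hgxs : forall i, grad f xs 0 i = 0 by move=> i; rewrite /grad mxE hg0.
have hN2 : norm2sq (x - xs) = \sum_i a i ^+ 2.
  by rewrite /norm2sq; apply: eq_bigr => i _; rewrite !mxE.
have hSg : mu * \sum_i a i ^+ 2 <= \sum_i grad f x 0 i * a i.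
  have := hsc x xs; rewrite hN2 /dotp => h; apply: le_trans h _.
  rewrite le_eqVlt; apply/orP; left; apply/eqP; apply: eq_bigr => i _.
  move: (grad f x) (grad f xs) (hgxs i) => gx gxs hgi.
  by rewrite !mxE hgi subr0.
have hS : \sum_i c i = p * \sum_i a i ^+ 2
    - 2 * alpha * p / eta * \sum_i grad f x 0 i * a i.
  rewrite /c !mulr_sumr -sumrB.
  apply: eq_bigr => i _; rewrite /a.
  set gi := grad f x 0 i. set xi := x 0 i. set xsi := xs 0 i.
  ring.
have hI10 : (0 <= I1)%E by apply: integral_ge0 => w _; rewrite lee_fin.
rewrite /condE.
apply: (@le_trans _ _ (((\sum_i c i)%:E + ((alpha ^+ 2 / eta)%:E * I1
   + (alpha ^+ 2 / eta * Cst * p)%:E)) * (p^-1)%:E)%E).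
  apply: lee_wpmul2r; first by rewrite lee_fin invr_ge0 ltW.
  apply: le_trans intY2 _; apply: leeD2l; apply: le_trans hae _.
  by rewrite hsplit.
rewrite -/p -/I1.
have k1 : 0 < alpha ^+ 2 / eta by rewrite divr_gt0 // exprn_gt0.
clearbody I1; clear hsplit; move: hI10; case: I1 => [r| |] hI10 //; last first.
  rewrite gt0_mulye ?lte_fin ?invr_gt0 // gt0_muley ?lte_fin // addey //.
  exact: leey.
rewrite -!EFinM -!EFinD lee_fin hS hN2.
have hk : 0 <= 2 * alpha / eta by rewrite divr_ge0 // ?mulr_ge0 // ltW.
have h := ler_wpM2l hk hSg.
rewrite /Cst.
move: h; set A2 := \sum_i a i ^+ 2; set Sg := \sum_i grad f x 0 i * a i.
set N := norm2 (x - xs); set sn := Num.sqrt n%:R => h.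
have -> : (p * A2 - 2 * alpha * p / eta * Sg + (alpha ^+ 2 / eta * r
    + alpha ^+ 2 / eta * (sn * (L * N)) * p)) / p
    = A2 - 2 * alpha / eta * Sg + alpha ^+ 2 / eta * (r / p)
      + alpha ^+ 2 / eta * (sn * (L * N)).
  by field; rewrite !gt_eqF.
lra.
Qed.
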